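(* Let $\theta\in\mathbb{R}\setminus\mathbb{Q}$ with best rational approximants $(p_n/q_n)_{n\ge0}$, and let $q'$ be a subsequence of $(q_n)_{n\ge0}$. Then there exist $\mu\in\mathbb{R}$ and a dense $G_\delta$-subset $E_1$ of $l^\infty$ such that for every $u\in E_1$, the radius of convergence of the power series $\varphi_{\mu,q',u}$ equals $1$, and also the radius of convergence of $\varphi_{\mu,q'}$ (the series $\varphi_{\mu,q',u}$ for the constant sequence $u_m\equiv1$) equals $1$.
   Context: Best rational approximants $p_n/q_n$ of an irrational $\theta$ are its continued fraction convergents, with $\gcd(p_n,q_n)=1$, $q_n\ge0$. A subsequence $q'$ of $(q_n)$ means $q'_n=q_{k_n}$ with $k_n$ strictly increasing. $l^\infty$ is the complex Banach space of bounded complex sequences $u=(u_m)_{m\ge0}$ with the sup norm. For $\mu\in\mathbb{R}$ and $u\in l^\infty$, $\varphi_{\mu,q',u}(z)=z e^{2\pi i\mu}\sum_{n=0}^\infty u_{q'_n}(1-e^{2\pi i q'_n\mu})z^{q'_n}$, where $u_{q'_n}$ is the $q'_n$-th term of $u$. *)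

(* Defs.v *)
From Stdlib Require Import Reals Lra Lia ZArith.
Open Scope R_scope.

Definition Cpx := (R * R)%type.
Definition Cadd (z w : Cpx) : Cpx := (fst z + fst w, snd z + snd w).
Definition Csub (z w : Cpx) : Cpx := (fst z - fst w, snd z - snd w).
Definition Cmul (z w : Cpx) : Cpx :=
  (fst z * fst w - snd z * snd w, fst z * snd w + snd z * fst w).
Definition Czero : Cpx := (0, 0).
Definition Cone : Cpx := (1, 0).
Definition Cmod (z : Cpx) : R := sqrt (fst z ^ 2 + snd z ^ 2).
Definition Cexpi (t : R) : Cpx := (cos t, sin t).

Definition irrational (x : R) : Prop :=
  forall (p q : Z), q <> 0%Z -> x <> IZR p / IZR q.

(** * Continued fraction expansion and convergent denominators q_n.
    floor = Int_part;  theta_0 = theta, theta_{n+1} = 1/(theta_n - floor theta_n),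
    a_n = floor theta_n,  q_{-1} = 0, q_0 = 1, q_{n+1} = a_{n+1} q_n + q_{n-1}. *)
Fixpoint cf_rem (theta : R) (n : nat) : R :=
  match n with
  | O => theta
  | S k => / (cf_rem theta k - IZR (Int_part (cf_rem theta k)))
  end.

Definition cf_a (theta : R) (n : nat) : Z := Int_part (cf_rem theta n).

(** returns (q_{n-1}, q_n) *)
Fixpoint cf_q_aux (theta : R) (n : nat) : nat * nat :=
  match n with
  | O => (0%nat, 1%nat)
  | S k => let (qm, qk) := cf_q_aux theta k in
           (qk, (Z.to_nat (cf_a theta (S k)) * qk + qm)%nat)
  end.

Definition cf_q (theta : R) (n : nat) : nat := snd (cf_q_aux theta n).

Definition linf (u : nat -> Cpx) : Prop :=
  exists M : R, forall m : nat, Cmod (u m) <= M.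

Definition supdist_lt (u v : nat -> Cpx) (eps : R) : Prop :=
  exists delta : R, delta < eps /\ forall m : nat, Cmod (Csub (u m) (v m)) <= delta.

Definition linf_open (O : (nat -> Cpx) -> Prop) : Prop :=
  forall u, linf u -> O u ->
    exists eps, 0 < eps /\ forall v, linf v -> supdist_lt u v eps -> O v.

Definition linf_Gdelta (E : (nat -> Cpx) -> Prop) : Prop :=
  exists O : nat -> ((nat -> Cpx) -> Prop),
    (forall j, linf_open (O j)) /\
    (forall u, E u <-> (linf u /\ forall j, O j u)).

Definition linf_dense (E : (nat -> Cpx) -> Prop) : Prop :=
  (forall u, E u -> linf u) /\
  forall u eps, linf u -> 0 < eps -> exists v, E v /\ supdist_lt u v eps.

Definition radius_is (a : nat -> Cpx) (rho : R) : Prop :=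
  is_lub (fun r => 0 <= r /\ exists M, forall k, Cmod (a k) * r ^ k <= M) rho.

Fixpoint Csum (f : nat -> Cpx) (n : nat) : Cpx :=
  match n with
  | O => f O
  | S k => Cadd (Csum f k) (f (S k))
  end.

(** Coefficient sequence of
      phi_{mu,q',u}(z) = z e^{2 pi i mu} sum_n u_{q'_n} (1 - e^{2 pi i q'_n mu}) z^{q'_n}:
    the coefficient of z^k is the sum of the terms with q'_n + 1 = k.
    (Since q'_n >= n, only indices n <= k can contribute.) *)
Definition phi_term (mu : R) (q' : nat -> nat) (u : nat -> Cpx) (n : nat) : Cpx :=
  Cmul (Cexpi (2 * PI * mu))
       (Cmul (u (q' n)) (Csub Cone (Cexpi (2 * PI * INR (q' n) * mu)))).

Definition phi_coef (mu : R) (q' : nat -> nat) (u : nat -> Cpx) (k : nat) : Cpx :=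
  Csum (fun n => if Nat.eqb (q' n + 1) k then phi_term mu q' u n else Czero) k.

(* Main.v *)
Require Import Defs.
From Stdlib Require Import Reals Lra Lia ZArith Psatz Wf_nat.
From Coquelicot Require Complex.
Open Scope R_scope.


Lemma Cmod_eq z : Cmod z = Complex.Cmod z.
Proof. reflexivity. Qed.

Lemma Cmod_ge0 z : 0 <= Cmod z.
Proof. apply Complex.Cmod_ge_0. Qed.

Lemma Cmod_mul z w : Cmod (Cmul z w) = Cmod z * Cmod w.
Proof. exact (Complex.Cmod_mult z w). Qed.

Lemma Cmod_sub_tri z w : Cmod z <= Cmod w + Cmod (Csub z w).
Proof.
  pose proof (Complex.Cmod_triangle w (Csub z w)) as H.
  unfold Complex.Cplus in H. destruct z, w; unfold Csub in *; simpl in *.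
  replace (r1 + (r - r1)) with r in H by ring.
  replace (r2 + (r0 - r2)) with r0 in H by ring. exact H.
Qed.

Lemma Cmod_sub_sym z w : Cmod (Csub z w) = Cmod (Csub w z).
Proof. unfold Cmod, Csub; destruct z, w; simpl. f_equal. ring. Qed.

Lemma Cmod_expi t : Cmod (Cexpi t) = 1.
Proof. unfold Cmod, Cexpi; cbn [fst snd].
  replace (cos t ^ 2 + sin t ^ 2) with 1. apply sqrt_1.
  pose proof (sin2_cos2 t). unfold Rsqr in H. lra. Qed.

Lemma Cmod_one : Cmod Cone = 1.
Proof. unfold Cmod, Cone; cbn [fst snd]. replace (1 ^ 2 + 0 ^ 2) with 1 by ring. apply sqrt_1. Qed.

Lemma fst_le z : Rabs (fst z) <= Cmod z.
Proof. unfold Cmod. rewrite <- sqrt_Rsqr_abs. apply sqrt_le_1_alt.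
  unfold Rsqr. nra. Qed.

Lemma snd_le z : Rabs (snd z) <= Cmod z.
Proof. unfold Cmod. rewrite <- sqrt_Rsqr_abs. apply sqrt_le_1_alt.
  unfold Rsqr. nra. Qed.

Lemma Cmod_le_comp z : Cmod z <= Rabs (fst z) + Rabs (snd z).
Proof. unfold Cmod. rewrite <- (sqrt_Rsqr (Rabs (fst z) + Rabs (snd z))).
  2: pose proof (Rabs_pos (fst z)); pose proof (Rabs_pos (snd z)); lra.
  apply sqrt_le_1_alt. unfold Rsqr.
  pose proof (Rabs_pos (fst z)); pose proof (Rabs_pos (snd z)).
  pose proof (Rsqr_abs (fst z)); pose proof (Rsqr_abs (snd z)). unfold Rsqr in *.
  simpl. nra. Qed.

Lemma sin_lower a : 0 <= a -> a <= 2 -> a / 3 <= sin a.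
Proof. intros. assert (a <= PI) by (pose proof PI2_1; lra).
  destruct (SIN a H H1) as [H2 _]. eapply Rle_trans; [|exact H2].
  replace (sin_lb a) with (a - a^3/6 + a^5/120 - a^7/5040)
    by (unfold sin_lb, sin_approx, sin_term; simpl; field).
  assert (0 <= a^5 * (42 - a^2)) by (apply Rmult_le_pos; [apply pow_le; lra| nra]).
  assert (a^3 <= 4 * a) by (simpl; nra).
  assert (a^7 = a^5 * a^2) by ring. lra. Qed.


Lemma frac_pos x : irrational x -> 0 < x - IZR (Int_part x) < 1.
Proof.
  intros Hx. destruct (base_Int_part x) as [H1 H2]. split; [|lra].
  destruct (Rle_lt_or_eq_dec _ _ H1) as [H|H]; [lra|].
  exfalso. apply (Hx (Int_part x) 1%Z); [lia|]. change (IZR 1) with 1. unfold Rdiv. rewrite Rinv_1, Rmult_1_r. auto.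
Qed.

Lemma irr_next x : irrational x -> irrational (/ (x - IZR (Int_part x))).
Proof.
  intros Hx p q Hq Heq. pose proof (frac_pos x Hx) as Hf.
  set (m := Int_part x) in *. set (f := x - IZR m) in *.
  assert (Hp : p <> 0%Z).
  { intro; subst p. rewrite Rdiv_0_l in Heq.
    pose proof (Rinv_neq_0_compat f ltac:(lra)). lra. }
  apply (Hx (m * p + q)%Z p Hp).
  assert (IZR q <> 0) by (apply not_0_IZR; auto).
  assert (IZR p <> 0) by (apply not_0_IZR; auto).
  assert (f = IZR q / IZR p).
  { rewrite <- (Rinv_inv f). rewrite Heq. field. split; auto. }
  rewrite plus_IZR, mult_IZR. unfold f in H1. field_simplify_eq; auto.
  replace x with (IZR m + IZR q / IZR p) by lra. field. auto.
Qed.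

Lemma rem_irr theta : irrational theta -> forall n, irrational (cf_rem theta n).
Proof. intros H n; induction n; simpl; auto. apply irr_next; auto. Qed.

Lemma a_ge1 theta : irrational theta -> forall n, (1 <= Z.to_nat (cf_a theta (S n)))%nat.
Proof.
  intros H n. unfold cf_a. simpl.
  pose proof (frac_pos _ (rem_irr theta H n)) as Hf.
  set (y := / (cf_rem theta n - IZR (Int_part (cf_rem theta n)))).
  assert (1 < y).
  { unfold y. rewrite <- Rinv_1. apply Rinv_lt_contravar; lra. }
  destruct (base_Int_part y) as [H1 H2].
  assert (Hz : 0 < IZR (Int_part y)) by lra. apply lt_IZR in Hz. lia.
Qed.

Lemma q_step theta n :
  cf_q theta (S n) = (Z.to_nat (cf_a theta (S n)) * cf_q theta n + fst (cf_q_aux theta n))%nat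
  /\ fst (cf_q_aux theta (S n)) = cf_q theta n.
Proof. unfold cf_q. simpl. destruct (cf_q_aux theta n); simpl; auto. Qed.

Lemma q_props theta : irrational theta -> forall n,
  (1 <= cf_q theta n)%nat /\ (cf_q theta n <= cf_q theta (S n))%nat /\
  ((1 <= n)%nat -> (cf_q theta n < cf_q theta (S n))%nat /\ (1 <= fst (cf_q_aux theta n))%nat).
Proof.
  intros H n. induction n as [|n IH].
  - destruct (q_step theta 0) as [E1 E2]. pose proof (a_ge1 theta H 0).
    unfold cf_q in *; simpl in *. split; [lia|]. split; [nia|]. lia.
  - destruct IH as [A [B C]].
    destruct (q_step theta (S n)) as [E1 E2]. pose proof (a_ge1 theta H (S n)).
    destruct (q_step theta n) as [F1 F2].
    split; [lia|]. rewrite E1. split; [nia|]. intros _. rewrite F2. split; nia.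
Qed.

Lemma q_ge theta : irrational theta -> forall n, (n <= cf_q theta n)%nat.
Proof.
  intros H n; induction n. lia.
  destruct n. pose proof (q_props theta H 1); lia.
  destruct (q_props theta H (S n)) as [_ [_ C]]. destruct C; lia.
Qed.

Lemma q_mono theta : irrational theta -> forall i j, (i <= j)%nat -> (cf_q theta i <= cf_q theta j)%nat.
Proof.
  intros H i j Hij. induction Hij. lia.
  destruct (q_props theta H m) as [_ [B _]]. lia.
Qed.

Lemma q_smono theta : irrational theta -> forall i j, (1 <= i)%nat -> (i < j)%nat -> (cf_q theta i < cf_q theta j)%nat.
Proof.
  intros H i j Hi Hij. induction Hij.
  - destruct (q_props theta H i) as [_ [_ C]]. destruct (C Hi); lia.
  - destruct (q_props theta H m) as [_ [_ C]]. destruct C; lia.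
Qed.


Lemma no_sqrt2_aux : forall n (p q : Z), Z.abs_nat q = n -> q <> 0%Z -> (p*p <> 2*q*q)%Z.
Proof.
  intro n. induction n as [n IH] using lt_wf_ind. intros p q Hn Hq Heq.
  destruct (Z.Even_or_Odd p) as [[a Ha]|[a Ha]]; subst p.
  - assert (Hq2 : (q*q = 2*a*a)%Z) by nia.
    destruct (Z.Even_or_Odd q) as [[b Hb]|[b Hb]]; subst q.
    + apply (IH (Z.abs_nat b)) with (p := a) (q := b); try lia.
    + nia.
  - nia.
Qed.

Lemma no_sqrt2 (p q : Z) : q <> 0%Z -> (p*p <> 2*q*q)%Z.
Proof. intros; eapply no_sqrt2_aux; eauto. Qed.

Lemma sqrt2_bounds : 7/5 < sqrt 2 < 3/2 /\ sqrt 2 * sqrt 2 = 2.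
Proof.
  assert (H := sqrt_sqrt 2 ltac:(lra)). assert (H0 := sqrt_lt_R0 2 ltac:(lra)).
  split; [split|]; auto; nra.
Qed.

Lemma IZR_nz_ge1 z : z <> 0%Z -> 1 <= Rabs (IZR z).
Proof.
  intros. destruct (Z_lt_le_dec z 0).
  - rewrite Rabs_left by (apply IZR_lt; auto).
    assert (IZR z <= -1) by (apply IZR_le; lia). lra.
  - assert (1 <= IZR z) by (apply IZR_le; lia). rewrite Rabs_right; lra.
Qed.

Lemma dist_bound (q : nat) (p : Z) : (1 <= q)%nat -> (0 <= p)%Z ->
  IZR p <= INR q * sqrt 2 + 1 -> / (4 * INR q) <= Rabs (INR q * sqrt 2 - IZR p).
Proof.
  intros Hq Hp Hpx. destruct sqrt2_bounds as [[S1 S2] S3].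
  assert (Q1 : 1 <= INR q) by (apply (le_INR 1); auto).
  assert (P0 : 0 <= IZR p) by (apply IZR_le; auto).
  set (x := INR q * sqrt 2) in *.
  assert (Hx2 : x * x = 2 * INR q * INR q) by (unfold x; nra).
  assert (Hz : (2 * Z.of_nat q * Z.of_nat q - p * p <> 0)%Z).
  { intro. apply (no_sqrt2 p (Z.of_nat q)); lia. }
  pose proof (IZR_nz_ge1 _ Hz) as H1.
  rewrite minus_IZR, !mult_IZR, <- !INR_IZR_INZ in H1.
  assert (E : 2 * INR q * INR q - IZR p * IZR p = (x - IZR p) * (x + IZR p)) by (rewrite <- Hx2; ring).
  rewrite E in H1.
  rewrite Rabs_mult in H1. rewrite (Rabs_right (x + IZR p)) in H1 by (unfold x; nra).
  assert (Hxb : x <= 3/2 * INR q) by (unfold x; nra).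
  assert (Hxa : 0 < x) by (unfold x; nra).
  assert (x + IZR p <= 4 * INR q) by lra.
  assert (0 < x + IZR p) by lra.
  apply (Rmult_le_reg_r (4 * INR q)). lra.
  rewrite Rinv_l by lra. pose proof (Rabs_pos (x - IZR p)). nra.
Qed.


Lemma Cmod_1_expi t : Cmod (Csub Cone (Cexpi t)) = sqrt (2 - 2 * cos t).
Proof. unfold Cmod, Csub, Cone, Cexpi; cbn [fst snd]. f_equal.
  pose proof (sin2_cos2 t). unfold Rsqr in H. nra. Qed.

Lemma D_lower (q : nat) : (1 <= q)%nat ->
  / (2 * INR q) <= Cmod (Csub Cone (Cexpi (2 * PI * INR q * sqrt 2))).
Proof.
  intros Hq. destruct sqrt2_bounds as [[S1 S2] S3].
  assert (Q1 : 1 <= INR q) by (apply (le_INR 1); auto).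
  set (x := INR q * sqrt 2).
  assert (Hxa : 1 < x) by (unfold x; nra).
  destruct (archimed x) as [U1 U2].
  set (z := up x) in *.
  assert (Hz : (0 < z)%Z) by (apply lt_IZR; lra).
  set (p0 := (z - 1)%Z).
  assert (Hp0 : (0 <= p0)%Z) by (unfold p0; lia).
  assert (Ep0 : IZR p0 = IZR z - 1) by (unfold p0; rewrite minus_IZR; reflexivity).
  set (f := x - IZR p0).
  assert (Hf : 0 <= f < 1) by (unfold f; lra).
  set (N := Z.to_nat p0).
  assert (EN : INR N = IZR p0) by (unfold N; rewrite INR_IZR_INZ, Z2Nat.id; auto).
  assert (Et : 2 * PI * INR q * sqrt 2 = 2 * (PI * f) + 2 * INR N * PI)
    by (rewrite EN; unfold f, x; ring).
  rewrite Cmod_1_expi, Et, cos_period, cos_2a_sin.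
  replace (2 - 2 * (1 - 2 * sin (PI * f) * sin (PI * f))) with (Rsqr (2 * sin (PI * f)))
    by (unfold Rsqr; ring).
  rewrite sqrt_Rsqr_abs.
  assert (PI3 : 3 < PI) by (pose proof PI2_3_2; lra). pose proof PI_4.
  assert (Key : / (4 * INR q) <= sin (PI * f)).
  { destruct (Rle_lt_dec f (1/2)).
    - pose proof (dist_bound q p0 Hq Hp0 ltac:(fold x; lra)) as D.
      fold x in D. rewrite Rabs_right in D by lra. fold f in D.
      assert (0 <= PI * f) by nra. assert (PI * f <= 2) by nra.
      assert (3 * f <= PI * f) by nra.
      pose proof (sin_lower (PI * f) ltac:(lra) ltac:(lra)). lra.
    - pose proof (dist_bound q z Hq ltac:(lia) ltac:(fold x; lra)) as D.
      fold x in D. rewrite Rabs_left1 in D by lra.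
      rewrite <- sin_PI_x. replace (PI - PI * f) with (PI * (1 - f)) by ring.
      assert (0 <= PI * (1-f)) by nra. assert (PI * (1-f) <= 2) by nra.
      assert (3 * (1-f) <= PI * (1-f)) by nra.
      pose proof (sin_lower (PI * (1-f)) ltac:(lra) ltac:(lra)). unfold f in *. lra. }
  assert (0 < / (4 * INR q)) by (apply Rinv_0_lt_compat; lra).
  rewrite Rabs_right by lra.
  replace (/ (2 * INR q)) with (2 * / (4 * INR q)) by (field; lra). lra.
Qed.


Lemma nat_large x : exists j : nat, x < INR j.
Proof.
  destruct (archimed x) as [U1 U2]. exists (Z.to_nat (up x)).
  destruct (Z_lt_le_dec 0 (up x)).
  - rewrite INR_IZR_INZ, Z2Nat.id by lia. lra.
  - assert (IZR (up x) <= 0) by (apply IZR_le; auto). pose proof (pos_INR (Z.to_nat (up x))). lra.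
Qed.

Lemma pow_quad3 h n : 0 <= h -> 1 + INR n * h + INR n * (INR n - 1) / 2 * h^2 <= (1 + h)^n.
Proof.
  intros Hh. induction n.
  - simpl. lra.
  - rewrite S_INR. simpl pow. pose proof (pos_INR n).
    assert (Hn : 0 <= INR n * (INR n - 1)).
    { destruct n. simpl; lra. rewrite S_INR. pose proof (pos_INR n). nra. }
    assert (0 <= INR n * (INR n - 1) * h^3) by (apply Rmult_le_pos; [auto|apply pow_le; lra]).
    assert (HI := Rmult_le_compat_l (1+h) _ _ ltac:(lra) IHn).
    simpl in *. nra.
Qed.

Lemma pow_quad h n : 0 <= h -> INR n * (INR n - 1) / 2 * h^2 <= (1 + h)^n.
Proof. intros. pose proof (pow_quad3 h n H). pose proof (pos_INR n). nra. Qed.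

Lemma radius_one (c : nat -> Cpx) :
  (exists B, forall k, Cmod (c k) <= B) ->
  (forall r, 1 < r -> forall M, exists k, M < Cmod (c k) * r ^ k) ->
  radius_is c 1.
Proof.
  intros [B HB] HU. split.
  - intros r [Hr [M HM]]. destruct (Rle_lt_dec r 1); auto.
    destruct (HU r r0 M) as [k Hk]. specialize (HM k). lra.
  - intros b Hb. apply Hb. split; [lra|]. exists B. intro k. rewrite pow1, Rmult_1_r. auto.
Qed.


Lemma growth h C : 0 < h -> exists Q : nat, forall q, (Q <= q)%nat -> C < / (2 * INR q) * (1 + h) ^ q.
Proof.
  intros Hh. destruct (nat_large (4 * Rabs C / h^2 + 1)) as [Q HQ].
  exists (S Q). intros q Hq.
  assert (HqQ : INR (S Q) <= INR q) by (apply le_INR; auto). rewrite S_INR in HqQ.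
  pose proof (pos_INR Q).
  assert (0 < h^2) by (apply pow_lt; auto).
  pose proof (pow_quad h q ltac:(lra)).
  assert (Hq1 : 1 <= INR q) by lra.
  assert (E : / (2 * INR q) * (INR q * (INR q - 1) / 2 * h ^ 2) = (INR q - 1) * h^2 / 4)
    by (field; lra).
  assert (Hm : / (2 * INR q) * (INR q * (INR q - 1) / 2 * h ^ 2) <= / (2 * INR q) * (1 + h) ^ q).
  { apply Rmult_le_compat_l; auto. left; apply Rinv_0_lt_compat; lra. }
  rewrite E in Hm.
  assert (4 * Rabs C / h ^ 2 < INR q - 1) by lra.
  assert (4 * Rabs C < (INR q - 1) * h^2).
  { apply (Rmult_lt_compat_r (h^2)) in H2; auto. unfold Rdiv in H2.
    rewrite Rmult_assoc, Rinv_l in H2 by lra. lra. }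
  pose proof (Rle_abs C). lra.
Qed.

Lemma Csum_single (f : nat -> Cpx) K n : (n <= K)%nat ->
  (forall m, (m <= K)%nat -> m <> n -> f m = Czero) -> Csum f K = f n.
Proof.
  intros HnK Hf.
  assert (G : forall L, (L <= K)%nat ->
    fst (Csum f L) = (if Nat.leb n L then fst (f n) else 0) /\
    snd (Csum f L) = (if Nat.leb n L then snd (f n) else 0)).
  { induction L; intros HL.
    - simpl. destruct n.
      + simpl; auto.
      + rewrite (Hf 0%nat) by lia. simpl. auto.
    - simpl Csum. destruct IHL as [I1 I2]; [lia|]. unfold Cadd; cbn [fst snd].
      rewrite I1, I2.
      destruct (Nat.eq_dec n (S L)) as [->|Hne].
      + rewrite (proj2 (Nat.leb_gt (S L) L)) by lia. rewrite Nat.leb_refl. split; ring.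
      + rewrite (Hf (S L)) by auto. unfold Czero; cbn [fst snd].
        destruct (Nat.leb n L) eqn:E1; destruct (Nat.leb n (S L)) eqn:E2;
          try (apply Nat.leb_le in E1 || apply Nat.leb_gt in E1);
          try (apply Nat.leb_le in E2 || apply Nat.leb_gt in E2); try lia; split; ring. }
  destruct (G K ltac:(lia)) as [G1 G2]. rewrite (proj2 (Nat.leb_le n K) HnK) in G1, G2.
  destruct (Csum f K), (f n). simpl in *. subst. reflexivity.
Qed.

Lemma Csum_bound2 (hit : nat -> bool) (g : nat -> Cpx) B :
  (forall m, Rabs (fst (g m)) <= B /\ Rabs (snd (g m)) <= B) ->
  (forall m m', (1 <= m)%nat -> (1 <= m')%nat -> hit m = true -> hit m' = true -> m = m') ->
  forall K, Cmod (Csum (fun m => if hit m then g m else Czero) K) <= 4 * B.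
Proof.
  intros Hg Hinj K.
  set (f := fun m => if hit m then g m else Czero).
  assert (HB : 0 <= B) by (destruct (Hg 0%nat); pose proof (Rabs_pos (fst (g 0%nat))); lra).
  assert (G : forall L,
    (Rabs (fst (Csum f L)) <= B /\ Rabs (snd (Csum f L)) <= B /\
       forall m, (1 <= m <= L)%nat -> hit m = false) \/
    (Rabs (fst (Csum f L)) <= 2 * B /\ Rabs (snd (Csum f L)) <= 2 * B /\
       exists m, (1 <= m <= L)%nat /\ hit m = true)).
  { induction L.
    - left. simpl. unfold f. destruct (hit 0%nat).
      + destruct (Hg 0%nat); repeat split; try lra; intros; lia.
      + unfold Czero; simpl; rewrite Rabs_R0; repeat split; try lra; intros; lia.
    - simpl Csum. unfold Cadd; cbn [fst snd].
      destruct (hit (S L)) eqn:Eh.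
      + destruct (Hg (S L)) as [g1 g2].
        assert (Ef : f (S L) = g (S L)) by (unfold f; rewrite Eh; auto). rewrite Ef.
        destruct IHL as [[A1 [A2 A3]]|[A1 [A2 [m [Hm1 Hm2]]]]].
        * right. split; [|split].
          -- eapply Rle_trans; [apply Rabs_triang|lra].
          -- eapply Rle_trans; [apply Rabs_triang|lra].
          -- exists (S L); split; [lia|auto].
        * exfalso. assert (m = S L) by (apply Hinj; auto; lia). lia.
      + assert (Ef : f (S L) = Czero) by (unfold f; rewrite Eh; auto). rewrite Ef.
        unfold Czero; cbn [fst snd]. repeat rewrite Rplus_0_r.
        destruct IHL as [[A1 [A2 A3]]|[A1 [A2 [m [Hm1 Hm2]]]]].
        * left. split; [lra|split; [lra|]]. intros m Hm.
          destruct (Nat.eq_dec m (S L)); [subst; auto|apply A3; lia].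
        * right. repeat split; auto. exists m; split; auto; lia. }
  eapply Rle_trans; [apply Cmod_le_comp|].
  destruct (G K) as [[A1 [A2 _]]|[A1 [A2 _]]]; lra.
Qed.


Section Main.
Variable theta : R.
Variable k : nat -> nat.
Hypothesis Hth : irrational theta.
Hypothesis Hk : forall n, (k n < k (S n))%nat.

Let qp := fun n => cf_q theta (k n).
Let mu := sqrt 2.
Let D n := Cmod (Csub Cone (Cexpi (2 * PI * INR (qp n) * mu))).

Lemma k_ge n : (n <= k n)%nat.
Proof. induction n; [lia|]. pose proof (Hk n); lia. Qed.

Lemma k_lt m n : (m < n)%nat -> (k m < k n)%nat.
Proof. intro H. induction H. apply Hk. pose proof (Hk m0); lia. Qed.

Lemma qp_ge n : (n <= qp n)%nat.
Proof. unfold qp. pose proof (q_ge theta Hth (k n)). pose proof (k_ge n). lia. Qed.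

Lemma qp_lt m n : (1 <= m)%nat -> (m < n)%nat -> (qp m < qp n)%nat.
Proof. intros. unfold qp. apply q_smono; auto. pose proof (k_ge m); lia. apply k_lt; auto. Qed.

Lemma qp_inj m n : (1 <= m)%nat -> (1 <= n)%nat -> qp m = qp n -> m = n.
Proof. intros. destruct (Nat.lt_total m n) as [H2|[H2|H2]]; auto.
  pose proof (qp_lt m n H H2); lia. pose proof (qp_lt n m H0 H2); lia. Qed.

Lemma qp0 n : (2 <= n)%nat -> (qp 0 < qp n)%nat.
Proof. intros. assert (qp 0 <= qp 1)%nat.
  { unfold qp. apply q_mono; auto. pose proof (k_lt 0 1); lia. }
  pose proof (qp_lt 1 n ltac:(lia) ltac:(lia)). lia. Qed.

Lemma coef_id u n : (2 <= n)%nat -> phi_coef mu qp u (qp n + 1) = phi_term mu qp u n.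
Proof.
  intros Hn. unfold phi_coef.
  rewrite (Csum_single _ _ n).
  - rewrite Nat.eqb_refl. auto.
  - pose proof (qp_ge n); lia.
  - intros m Hm Hmn. destruct (Nat.eqb (qp m + 1) (qp n + 1)) eqn:E; auto.
    apply Nat.eqb_eq in E. exfalso. destruct m.
    + pose proof (qp0 n Hn); lia.
    + apply Hmn. apply qp_inj; lia.
Qed.

Lemma term_mod u n : Cmod (phi_term mu qp u n) = Cmod (u (qp n)) * D n.
Proof. unfold phi_term, D. rewrite !Cmod_mul, Cmod_expi. ring. Qed.

Lemma D_le2 n : D n <= 2.
Proof. unfold D. rewrite Cmod_1_expi. apply Rle_trans with (sqrt (2*2)); [|rewrite sqrt_square; lra].
  apply sqrt_le_1_alt. pose proof (COS_bound (2 * PI * INR (qp n) * mu)). lra. Qed.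

Lemma coef_bounded u : linf u -> exists B, forall K, Cmod (phi_coef mu qp u K) <= B.
Proof.
  intros [M HM]. exists (4 * (2 * M)). intro K. unfold phi_coef.
  apply (Csum_bound2 (fun m => Nat.eqb (qp m + 1) K) (phi_term mu qp u)).
  - intro m. pose proof (term_mod u m). pose proof (D_le2 m).
    pose proof (HM (qp m)). pose proof (Cmod_ge0 (u (qp m))).
    assert (Cmod (phi_term mu qp u m) <= 2 * M).
    { rewrite H. unfold D in *. pose proof (Cmod_ge0 (Csub Cone (Cexpi (2 * PI * INR (qp m) * mu)))). nra. }
    pose proof (fst_le (phi_term mu qp u m)). pose proof (snd_le (phi_term mu qp u m)). lra.
  - intros m m' H1 H2 E1 E2. apply Nat.eqb_eq in E1, E2. apply qp_inj; lia.
Qed.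

Lemma propP rho C N : 1 < rho -> exists n, (N <= n)%nat /\ (2 <= n)%nat /\ C < D n * rho ^ (qp n).
Proof.
  intros Hr. destruct (growth (rho - 1) C ltac:(lra)) as [Q HQ].
  set (n := Nat.max N (Nat.max Q 2)). exists n. split; [lia|split;[lia|]].
  pose proof (qp_ge n). specialize (HQ (qp n) ltac:(lia)).
  replace (1 + (rho - 1)) with rho in HQ by ring.
  pose proof (D_lower (qp n) ltac:(lia)). fold mu in H0. fold (D n) in H0.
  assert (0 < rho ^ qp n) by (apply pow_lt; lra).
  assert (/ (2 * INR (qp n)) * rho ^ qp n <= D n * rho ^ qp n) by (apply Rmult_le_compat_r; lra).
  lra.
Qed.


Let rho (j : nat) := 1 + / (INR j + 1).
Let O (j : nat) (u : nat -> Cpx) :=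
  exists n, (j + 2 <= n)%nat /\ INR j < Cmod (u (qp n)) * D n * rho j ^ qp n.
Let E1 u := linf u /\ forall j, O j u.

Lemma rho_gt1 j : 1 < rho j.
Proof. unfold rho. pose proof (pos_INR j). assert (0 < / (INR j + 1)) by (apply Rinv_0_lt_compat; lra). lra. Qed.

Lemma D_ge0 n : 0 <= D n.
Proof. unfold D. apply Cmod_ge0. Qed.

Lemma O_open j : linf_open (O j).
Proof.
  intros u _ [n [Hn Hlt]].
  set (A := D n * rho j ^ qp n).
  assert (HA0 : 0 <= A) by (unfold A; apply Rmult_le_pos; [apply D_ge0|apply pow_le; pose proof (rho_gt1 j); lra]).
  rewrite Rmult_assoc in Hlt. fold A in Hlt.
  pose proof (pos_INR j). pose proof (Cmod_ge0 (u (qp n))).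
  assert (HA : 0 < A).
  { destruct HA0 as [|HA0]; auto. rewrite <- HA0 in Hlt. lra. }
  exists ((Cmod (u (qp n)) * A - INR j) / A). split.
  { apply Rdiv_lt_0_compat; lra. }
  intros v _ [delta [Hd Hm]]. exists n. split; auto. rewrite Rmult_assoc. fold A.
  pose proof (Cmod_sub_tri (u (qp n)) (v (qp n))). specialize (Hm (qp n)).
  assert (Hv : Cmod (u (qp n)) - (Cmod (u (qp n)) * A - INR j) / A < Cmod (v (qp n))) by lra.
  apply (Rmult_lt_compat_r A) in Hv; auto.
  replace ((Cmod (u (qp n)) - (Cmod (u (qp n)) * A - INR j) / A) * A) with (INR j) in Hv by (field; lra).
  auto.
Qed.

Lemma Cmod_real d : Cmod (d, 0) = Rabs d.
Proof. apply Rle_antisym.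
  - eapply Rle_trans; [apply Cmod_le_comp|]. simpl. rewrite Rabs_R0. lra.
  - apply (fst_le (d, 0)). Qed.

Lemma E1_dense : linf_dense E1.
Proof.
  split. { intros u [H _]; auto. }
  intros u eps [M HM] Heps. set (d := eps / 4).
  assert (Hd : 0 < d) by (unfold d; lra).
  set (v := fun m => if Rlt_dec (Cmod (u m)) d then (d, 0) else u m).
  assert (Hv : forall m, d <= Cmod (v m)).
  { intro m. unfold v. destruct (Rlt_dec (Cmod (u m)) d).
    - rewrite Cmod_real, Rabs_right; lra.
    - lra. }
  exists v. split; [split|].
  - exists (Rmax M d). intro m. unfold v. destruct (Rlt_dec (Cmod (u m)) d).
    + rewrite Cmod_real, Rabs_right by lra. apply Rmax_r.
    + eapply Rle_trans; [apply HM|apply Rmax_l].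
  - intro j. destruct (propP (rho j) (INR j / d) (j + 2) (rho_gt1 j)) as [n [H1 [H2 H3]]].
    exists n. split; auto. pose proof (Hv (qp n)).
    assert (0 <= D n * rho j ^ qp n) by (apply Rmult_le_pos; [apply D_ge0|apply pow_le; pose proof (rho_gt1 j); lra]).
    rewrite Rmult_assoc.
    apply Rlt_le_trans with (d * (D n * rho j ^ qp n)).
    + apply (Rmult_lt_compat_l d) in H3; auto. replace (d * (INR j / d)) with (INR j) in H3 by (field; lra). auto.
    + apply Rmult_le_compat_r; auto.
  - exists (3 * eps / 4). split; [lra|]. intro m. unfold v.
    destruct (Rlt_dec (Cmod (u m)) d).
    + eapply Rle_trans; [apply Cmod_le_comp|]. unfold Csub; simpl.
      pose proof (fst_le (u m)). pose proof (snd_le (u m)).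
      assert (Rabs (fst (u m) + - d) <= Rabs (fst (u m)) + d).
      { pose proof (Rabs_triang (fst (u m)) (- d)). rewrite Rabs_Ropp in H1.
        rewrite (Rabs_right d) in H1 by lra. auto. }
      unfold Rminus. replace (snd (u m) + - 0) with (snd (u m)) by ring. unfold d in *. lra.
    + eapply Rle_trans; [apply Cmod_le_comp|]. unfold Csub.
      replace (fst (u m) - fst (u m)) with 0 by ring. replace (snd (u m) - snd (u m)) with 0 by ring.
      simpl. rewrite Rabs_R0. lra.
Qed.

Lemma E1_radius u : E1 u -> radius_is (phi_coef mu qp u) 1.
Proof.
  intros [Hl HO]. apply radius_one; [apply coef_bounded; auto|].
  intros r Hr M.
  destruct (nat_large (Rmax M (/ (r - 1)))) as [j Hj].
  pose proof (Rmax_l M (/ (r - 1))). pose proof (Rmax_r M (/ (r - 1))).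
  assert (Hrho : rho j <= r).
  { unfold rho. assert (0 < / (r - 1)) by (apply Rinv_0_lt_compat; lra).
    assert (/ (INR j + 1) < / / (r - 1)) by (apply Rinv_lt_contravar; [nra|lra]).
    rewrite Rinv_inv in H2. lra. }
  destruct (HO j) as [n [Hn Hlt]].
  exists (qp n + 1)%nat. rewrite coef_id by lia. rewrite term_mod.
  rewrite pow_add, pow_1.
  assert (rho j ^ qp n <= r ^ qp n) by (apply pow_incr; pose proof (rho_gt1 j); lra).
  assert (0 <= Cmod (u (qp n)) * D n) by (apply Rmult_le_pos; [apply Cmod_ge0|apply D_ge0]).
  assert (0 <= r ^ qp n) by (apply pow_le; lra).
  assert (Cmod (u (qp n)) * D n * rho j ^ qp n <= Cmod (u (qp n)) * D n * (r ^ qp n * r)).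
  { apply Rmult_le_compat_l; auto. nra. }
  lra.
Qed.

Lemma one_radius : radius_is (phi_coef mu qp (fun _ => Cone)) 1.
Proof.
  apply radius_one.
  - apply coef_bounded. exists 1. intro; rewrite Cmod_one; lra.
  - intros r Hr M. destruct (propP r M 0 Hr) as [n [_ [H2 H3]]].
    exists (qp n + 1)%nat. rewrite coef_id by lia. rewrite term_mod, Cmod_one.
    rewrite pow_add, pow_1.
    assert (0 <= D n * r ^ qp n) by (apply Rmult_le_pos; [apply D_ge0|apply pow_le; lra]).
    nra.
Qed.

Lemma final : exists (mu0 : R) (E : (nat -> Cpx) -> Prop),
    linf_Gdelta E /\ linf_dense E /\
    (forall u, E u -> radius_is (phi_coef mu0 (fun n => cf_q theta (k n)) u) 1) /\
    radius_is (phi_coef mu0 (fun n => cf_q theta (k n)) (fun _ => Cone)) 1.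
Proof.
  exists mu, E1. split; [|split; [|split]].
  - exists O. split. apply O_open. intro u; unfold E1; tauto.
  - apply E1_dense.
  - apply E1_radius.
  - apply one_radius.
Qed.

End Main.


Theorem lemma2p3 (theta : R) (k : nat -> nat) :
  irrational theta ->
  (forall n, (k n < k (S n))%nat) ->
  exists (mu : R) (E1 : (nat -> Cpx) -> Prop),
    linf_Gdelta E1 /\ linf_dense E1 /\
    (forall u, E1 u -> radius_is (phi_coef mu (fun n => cf_q theta (k n)) u) 1) /\
    radius_is (phi_coef mu (fun n => cf_q theta (k n)) (fun _ => Cone)) 1.
Proof.
  intros H1 H2. exact (final theta k H1 H2).
Qed.
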